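(* Let $\mathbb{R}^n_s$ be $\mathbb{R}^n$ with a non-degenerate symmetric bilinear form $\langle\cdot,\cdot\rangle$ of signature $(n-s,s)$, and let $G\subset\mathrm{Iso}(\mathbb{R}^n_s)$ be a real Zariski-closed subgroup whose centralizer in $\mathrm{Iso}(\mathbb{R}^n_s)$ acts transitively on $\mathbb{R}^n$. Fix $p\in\mathbb{R}^n$ and let $(\cdot,\cdot)$ be the orbit metric on $G$, i.e. the pullback of $\langle\cdot,\cdot\rangle$ restricted to the orbit $F_p=G.p$ via the orbit map $g\mapsto g.p$ (a left-invariant, possibly degenerate, field of symmetric bilinear forms). Then $(\cdot,\cdot)$ is bi-invariant: for all left-invariant vector fields $X,Y,Z$ on $G$, $$([X,Y],Z)=-(Y,[X,Z]).$$ *)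

(* Defs.v *)
From HB Require Import structures.
From mathcomp Require Import all_boot all_order all_algebra.
From mathcomp Require Import all_classical all_reals all_analysis.
From mathcomp Require mpoly.

Set Implicit Arguments.
Unset Strict Implicit.
Unset Printing Implicit Defensive.

Import Order.TTheory GRing.Theory Num.Theory.
Local Open Scope ring_scope.
Local Open Scope classical_set_scope.

Section Affine.
Variables (R : realType) (n : nat).

(** An affine map x |-> A x + b of R^n, represented by the pair (A, b).
    The group Iso(R^n_s) is realised as a subgroup of the affine group. *)
Definition aff := ('M[R]_n * 'cV[R]_n)%type.

Definition aone : aff := (1%:M, 0).
Definition amul (g h : aff) : aff := (g.1 *m h.1, g.1 *m h.2 + g.2).
Definition ainv (g : aff) : aff := (invmx g.1, - (invmx g.1 *m g.2)).
Definition aact (g : aff) (x : 'cV[R]_n) : 'cV[R]_n := g.1 *m x + g.2.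

Definition Jform (s : nat) : 'M[R]_n :=
  diag_mx (\row_(i < n) (if (i < n - s)%N then 1 else -1)).

Definition bil (s : nat) (x y : 'cV[R]_n) : R := (x^T *m Jform s *m y) 0 0.

Definition is_iso (s : nat) (g : aff) : Prop := g.1^T *m Jform s *m g.1 = Jform s.

Definition iso_subgroup (s : nat) (G : set aff) : Prop :=
  (forall g, G g -> is_iso s g) /\ G aone /\
  (forall g h, G g -> G h -> G (amul g h)) /\ (forall g, G g -> G (ainv g)).

Definition coords (g : aff) : 'I_(n * n + n) -> R :=
  fun i => match fintype.split i with
           | inl k => mxvec g.1 0 k
           | inr k => g.2 k 0
           end.

Definition zariski_closed_in_iso (s : nat) (G : set aff) : Prop :=
  exists P : set (mpoly.mpoly (n * n + n) R),
    forall g, G g <-> (is_iso s g /\ forall q, P q -> mpoly.meval (coords g) q = 0).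

Definition centralizer_transitive (s : nat) (G : set aff) : Prop :=
  forall x y : 'cV[R]_n, exists c : aff,
    is_iso s c /\ (forall g, G g -> amul c g = amul g c) /\ aact c x = y.

(** Lie algebra of G (a closed subgroup of the affine group, viewed inside
    GL(n+1) as block matrices [[A, b],[0, 1]]): elements (X, v) (the block
    matrix [[X, v],[0, 0]]) that are velocities at t = 0 of curves in G
    through the identity. *)
Definition lie_alg (G : set aff) (X : aff) : Prop :=
  exists c : R -> aff, (forall t, G (c t)) /\ c 0 = aone /\
    (forall i j, is_derive (0 : R) (1 : R) (fun t => (c t).1 i j) (X.1 i j)) /\
    (forall i j, is_derive (0 : R) (1 : R) (fun t => (c t).2 i j) (X.2 i j)).

(** Lie bracket = matrix commutator of [[X, v],[0,0]] and [[Y, w],[0,0]]. *)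
Definition lie_br (X Y : aff) : aff :=
  (X.1 *m Y.1 - Y.1 *m X.1, X.1 *m Y.2 - Y.1 *m X.2).

(** Differential at the identity of the orbit map g |-> g.p, applied to X. *)
Definition inf_act (X : aff) (p : 'cV[R]_n) : 'cV[R]_n := X.1 *m p + X.2.

(** The orbit metric at the identity (it is left-invariant, hence determined
    by its value on the Lie algebra). *)
Definition orbit_metric (s : nat) (p : 'cV[R]_n) (X Y : aff) : R :=
  bil s (inf_act X p) (inf_act Y p).

End Affine.

(* Main.v *)
Require Import Defs.
From HB Require Import structures.
From mathcomp Require Import all_boot all_order all_algebra.
From mathcomp Require Import all_classical all_reals all_analysis.
From mathcomp Require Import lra.
Import Order.TTheory GRing.Theory Num.Theory.
Local Open Scope ring_scope.

Section H.
Variable R : realType.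

Lemma der_uniq (f : R -> R) a b : is_derive (0:R) (1:R) f a -> is_derive (0:R) (1:R) f b -> a = b.
Proof. move=> H1 H2; by rewrite -(@derive_val _ _ _ _ _ _ _ H1) -(@derive_val _ _ _ _ _ _ _ H2). Qed.

Lemma der_sum m (F : 'I_m -> R -> R) dF :
  (forall a, is_derive (0:R) (1:R) (F a) (dF a)) ->
  is_derive (0:R) (1:R) (fun t => \sum_a F a t) (\sum_a dF a).
Proof. move=> H; rewrite -fct_sumE; exact: is_derive_sum. Qed.

Lemma der_scal (f : R -> R) k df : is_derive (0:R) (1:R) f df ->
  is_derive (0:R) (1:R) (fun t => k * f t) (k * df).
Proof. move=> H; exact: (is_deriveZ k H). Qed.

Lemma der_scar (f : R -> R) k df : is_derive (0:R) (1:R) f df ->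
  is_derive (0:R) (1:R) (fun t => f t * k) (df * k).
Proof. move=> H. have := @der_scal f k df H.
have -> : (fun t => k * f t) = (fun t => f t * k) by apply/funext=> t; rewrite mulrC.
by rewrite mulrC. Qed.

Lemma der_mul (f g : R -> R) df dg : is_derive (0:R) (1:R) f df -> is_derive (0:R) (1:R) g dg ->
  is_derive (0:R) (1:R) (fun t => f t * g t) (f 0 * dg + g 0 * df).
Proof. move=> H1 H2; exact: (is_deriveM H1 H2). Qed.

Lemma der_add (f g : R -> R) df dg : is_derive (0:R) (1:R) f df -> is_derive (0:R) (1:R) g dg ->
  is_derive (0:R) (1:R) (fun t => f t + g t) (df + dg).
Proof. move=> H1 H2; exact: (is_deriveD H1 H2). Qed.

Lemma der_cst (k : R) : is_derive (0:R) (1:R) (fun _ : R => k) 0.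
Proof. exact: is_derive_cst. Qed.

Lemma der_lin n m k l (M : R -> 'M[R]_(n,m)) (D : 'M[R]_(n,m)) (L : 'M[R]_(k,n)) (Rm : 'M[R]_(m,l)) :
  (forall i j, is_derive (0:R) (1:R) (fun t => M t i j) (D i j)) ->
  forall i j, is_derive (0:R) (1:R) (fun t => (L *m M t *m Rm) i j) ((L *m D *m Rm) i j).
Proof.
move=> H i j.
have -> : (fun t => (L *m M t *m Rm) i j) =
  (fun t => \sum_a (\sum_b L i b * M t b a) * Rm a j).
  by apply/funext=> t; rewrite mxE; apply: eq_bigr => a _; rewrite mxE.
rewrite mxE; apply: der_sum => a; rewrite mxE; apply: der_scar.
by apply: der_sum => b; apply: der_scal.
Qed.
Arguments der_lin {n m k l M D} L Rm.
Arguments der_mul {f g df dg}.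
Arguments der_add {f g df dg}.
Arguments der_uniq {f a b}.
Arguments der_sum {m F dF}.
Variable n : nat.
Implicit Types (s : nat) (x y z : 'cV[R]_n).

Lemma bilE s x y : bil s x y = \sum_i x i 0 * (Jform R n s *m y) i 0.
Proof. rewrite /bil -mulmxA mxE; apply: eq_bigr => i _; by rewrite mxE. Qed.

Lemma bilDl s x y z : bil s (x + y) z = bil s x z + bil s y z.
Proof. rewrite !bilE -big_split; apply: eq_bigr => i _; by rewrite mxE mulrDl. Qed.
Lemma bilDr s x y z : bil s z (x + y) = bil s z x + bil s z y.
Proof. rewrite !bilE -big_split; apply: eq_bigr => i _; by rewrite mulmxDr mxE mulrDr. Qed.
Lemma bilNl s x y : bil s (- x) y = - bil s x y.
Proof. rewrite !bilE -sumrN; apply: eq_bigr => i _; by rewrite mxE mulNr. Qed.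
Lemma bilNr s x y : bil s x (- y) = - bil s x y.
Proof. rewrite !bilE -sumrN; apply: eq_bigr => i _; by rewrite mulmxN mxE mulrN. Qed.
Lemma bilBl s x y z : bil s (x - y) z = bil s x z - bil s y z.
Proof. by rewrite bilDl bilNl. Qed.
Lemma bilBr s x y z : bil s z (x - y) = bil s z x - bil s z y.
Proof. by rewrite bilDr bilNr. Qed.

Lemma bil_iso s (c : aff R n) x y : is_iso s c -> bil s (c.1 *m x) (c.1 *m y) = bil s x y.
Proof.
move=> H; rewrite /bil trmx_mul.
by rewrite -!mulmxA [c.1^T *m _]mulmxA [(c.1^T *m _) *m _]mulmxA H.
Qed.

Lemma aact_mul (a b : aff R n) x : aact (amul a b) x = aact a (aact b x).
Proof. by rewrite /aact /amul /= mulmxDr mulmxA addrA. Qed.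

Lemma killing s (G : set (aff R n)) X : (forall g, G g -> is_iso s g) ->
  lie_alg G X -> forall u w, bil s (X.1 *m u) w + bil s u (X.1 *m w) = 0.
Proof.
move=> Hiso [c [Gc [c0 [d1 d2]]]] u w.
set J := Jform R n s.
have Hh : (fun t => bil s ((c t).1 *m u) ((c t).1 *m w)) = (fun _ => bil s u w).
  by apply/funext => t; rewrite bil_iso //; apply: Hiso.
have E : (fun t => bil s ((c t).1 *m u) ((c t).1 *m w)) =
   (fun t => \sum_i (1%:M *m (c t).1 *m u) i 0 * (J *m (c t).1 *m w) i 0).
  by apply/funext => t; rewrite bilE mul1mx; apply: eq_bigr => i _; rewrite mulmxA.
have D1 := der_sum (fun i => der_mul (der_lin 1%:M u d1 i 0) (der_lin J w d1 i 0)).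
rewrite -E Hh in D1.
have := der_uniq D1 (der_cst _).
rewrite c0 /= !mulmx1 !mul1mx => <-.
rewrite !bilE -big_split /=; apply: eq_bigr => i _.
by rewrite mulrC -!mulmxA addrC.
Qed.

Lemma commute_act (G : set (aff R n)) X (c : aff R n) p :
  lie_alg G X -> (forall g, G g -> amul c g = amul g c) ->
  inf_act X (aact c p) = c.1 *m inf_act X p.
Proof.
move=> [g [Gg [g0 [d1 d2]]]] Hc.
apply/matrixP => i j; rewrite (ord1 j) {j}.
have E : (fun t => (aact c (aact (g t) p)) i 0) = (fun t => (aact (g t) (aact c p)) i 0).
  by apply/funext => t; rewrite -!aact_mul Hc.
have EL : (fun t => (aact c (aact (g t) p)) i 0) =
  (fun t => (c.1 *m (g t).1 *m p) i 0 + (c.1 *m (g t).2 *m 1%:M) i 0 + c.2 i 0).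
  by apply/funext => t; rewrite /aact mulmxDr mulmx1 mulmxA !mxE.
have ER : (fun t => (aact (g t) (aact c p)) i 0) =
  (fun t => (1%:M *m (g t).1 *m aact c p) i 0 + (1%:M *m (g t).2 *m 1%:M) i 0).
  by apply/funext => t; rewrite /aact mulmx1 !mul1mx !mxE.
have DL := der_add (der_add (der_lin c.1 p d1 i 0) (der_lin c.1 1%:M d2 i 0)) (der_cst (c.2 i 0)).
have DR := der_add (der_lin 1%:M (aact c p) d1 i 0) (der_lin 1%:M 1%:M d2 i 0).
rewrite -EL E ER in DL.
have := der_uniq DL DR.
rewrite /inf_act !mulmx1 !mul1mx addr0 mulmxDr mulmxA !mxE => ->.
done.
Qed.

End H.

Theorem proposition4p5 (R : realType) (n s : nat) (G : set (aff R n))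
  (p : 'cV[R]_n) :
  (s <= n)%N ->
  iso_subgroup s G ->
  zariski_closed_in_iso s G ->
  centralizer_transitive s G ->
  forall X Y Z : aff R n, lie_alg G X -> lie_alg G Y -> lie_alg G Z ->
    orbit_metric s p (lie_br X Y) Z = - orbit_metric s p Y (lie_br X Z).
Proof.
move=> _ [Hiso _] _ Hct X Y Z LX LY LZ.
have Hconst : forall q, bil s (inf_act Y q) (inf_act Z q) = bil s (inf_act Y p) (inf_act Z p).
  move=> q; have [c [ci [cc <-]]] := Hct p q.
  by rewrite (@commute_act _ _ _ _ _ p LY cc) (@commute_act _ _ _ _ _ p LZ cc) bil_iso.
set v := inf_act X p.
have EY : forall W : aff R n, inf_act W (p + v) = inf_act W p + W.1 *m v.
  by move=> W; rewrite /inf_act mulmxDr addrAC.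
have EYm : forall W : aff R n, inf_act W (p - v) = inf_act W p - W.1 *m v.
  by move=> W; rewrite /inf_act mulmxBr addrAC.
have H1 := Hconst (p + v); have H2 := Hconst (p - v).
rewrite !EY !EYm in H1 H2.
have EB : forall W : aff R n, inf_act (lie_br X W) p = X.1 *m inf_act W p - W.1 *m v.
  move=> W; rewrite /inf_act /lie_br /= mulmxBl !mulmxDr -!mulmxA.
  by rewrite opprD addrACA.
rewrite /orbit_metric !EB bilBl bilBr.
have K1 := @killing _ _ _ _ _ Hiso LX (inf_act Y p) (inf_act Z p).
move: H1 H2 K1.
generalize (inf_act Y p) (inf_act Z p) => a b.
rewrite ?bilBl ?bilBr ?bilDl ?bilDr ?bilNl ?bilNr.
move=> H1 H2 K1.
lra.
Qed.
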